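(* Let $S$ be a triangulated surface with set of simplices $\mathcal V=\mathcal V_0\cup\mathcal V_1\cup\mathcal V_2$. Then any map $T_2:\mathcal V_2\to \operatorname{Multisets}(\mathcal N)$ such that $|T_2(\sigma)|=3$ for every face $\sigma\in\mathcal V_2$ extends to a simplicial surface tonnetz, i.e. there exists a simplicial surface tonnetz $T:\mathcal V\to\operatorname{Multisets}(\mathcal N)$ on $S$ with $T|_{\mathcal V_2}=T_2$.
   Context: Let $\mathcal N=\mathbb Z/12\mathbb Z$ (pitch classes). A multiset in $\mathcal N$ is a finite collection of elements of $\mathcal N$ with (finite) multiplicities; $\operatorname{Multisets}(\mathcal N)$ denotes the set of all of them. For a multiset $\mathcal C$, $|\mathcal C|$ is its order (number of elements counted with multiplicity) and $[\mathcal C]$ its underlying set. For a set $\mathcal A$ and multiset $\mathcal C$, a bijection $\phi:\mathcal A\to\mathcal C$ means a map $\phi:\mathcal A\to[\mathcal C]$ such that for each $c\in[\mathcal C]$ the cardinality of $\phi^{-1}(c)$ equals the multiplicity of $c$ in $\mathcal C$. Let $S$ be a surface (2-dimensional topological manifold, without boundary) with a triangulation whose sets of vertices, edges and faces are $\mathcal V_0,\mathcal V_1,\mathcal V_2$; $\mathcal V=\mathcal V_0\cup\mathcal V_1\cup\mathcal V_2$ is partially ordered by inclusion, and $\tau\prec\sigma$ means $\tau\le\sigma$ with $\tau$ of codimension 1 in $\sigma$. Every edge has two vertices and lies in exactly two faces. A simplicial surface tonnetz on $S$ is a map $T:\mathcal V\to\operatorname{Multisets}(\mathcal N)$ such that: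 (1) (downwards coherent) for each $\sigma\in\mathcal V_1\cup\mathcal V_2$ there exists a bijection $\partial_\sigma:\{\tau\mid\tau\prec\sigma\}\to T(\sigma)$ such that $\partial_\sigma(\tau)=N$ implies $N\in T(\tau)$; (2) (upwards coherent) for each $\rho\in\mathcal V_0\cup\mathcal V_1$ there exists a bijection $\Delta_\rho:\{\tau\mid\tau\succ\rho\}\to T(\rho)$ such that $\Delta_\rho(\tau)=N$ implies $N\in T(\tau)$. (The bijections are not part of the data; only their existence is required.) *)

(* Defs.v *)
From mathcomp Require Import all_boot all_order all_algebra.
From mathcomp Require Import finmap.
Set Implicit Arguments. Unset Strict Implicit. Unset Printing Implicit Defensive.
Local Open Scope fset_scope.

Definition Note := 'Z_12.

Definition mset := {ffun Note -> nat}.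
Definition morder (C : mset) : nat := \sum_(N : Note) C N.
Definition in_mset (N : Note) (C : mset) : Prop := 0 < C N.

(* Combinatorial triangulated surface (without boundary): an abstract
   simplicial complex K on a vertex type V (simplices = nonempty finite sets
   of vertices), of dimension 2, pure, every edge in exactly two faces, and
   the link of every vertex is a (finite) cycle of length >= 3.  The
   vertex type may be infinite (noncompact surfaces), the triangulation
   being locally finite. *)
Definition is_vertex (V : choiceType) (K : {fset V} -> Prop) s := K s /\ #|` s| = 1.
Definition is_edge (V : choiceType) (K : {fset V} -> Prop) s := K s /\ #|` s| = 2.
Definition is_face (V : choiceType) (K : {fset V} -> Prop) s := K s /\ #|` s| = 3.

Definition cyc_adj (V : eqType) (w : seq V) (a b : V) : Prop :=
  a \in w /\ (next w a = b \/ next w b = a).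

Record triangulated_surface (V : choiceType) (K : {fset V} -> Prop) : Prop := {
  ts_dim : forall s, K s -> 0 < #|` s| <= 3;
  ts_closed : forall s t, K s -> t `<=` s -> t != fset0 -> K t;
  ts_pure : forall s, K s -> exists f, is_face K f /\ s `<=` f;
  ts_edge_two_faces : forall e, is_edge K e ->
    exists f1 f2, [/\ f1 != f2, is_face K f1 /\ e `<=` f1, is_face K f2 /\ e `<=` f2
      & forall f, is_face K f -> e `<=` f -> f = f1 \/ f = f2];
  ts_link_cycle : forall v, is_vertex K [fset v] ->
    exists w : seq V, [/\ uniq w, 3 <= size w &
      forall a b, is_face K [fset v; a; b] <-> cyc_adj w a b]
}.

Definition prec (V : choiceType) (K : {fset V} -> Prop) (t s : {fset V}) : Prop :=
  K t /\ K s /\ t `<=` s /\ #|` t|.+1 = #|` s|.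

(* phi is a bijection from the set A of simplices onto the multiset C:
   A is finite (enumerated without repetition by l) and each note N has
   exactly C N preimages in A. *)
Definition is_bij (V : choiceType) (A : {fset V} -> Prop)
    (phi : {fset V} -> Note) (C : mset) : Prop :=
  exists l : seq {fset V}, [/\ uniq l, (forall t, t \in l <-> A t)
    & forall N : Note, count (fun t => phi t == N) l = C N].

Definition is_tonnetz (V : choiceType) (K : {fset V} -> Prop)
    (T : {fset V} -> mset) : Prop :=
  (forall s, K s -> 2 <= #|` s| ->
     exists d, is_bij (fun t => prec K t s) d (T s) /\
       forall t, prec K t s -> in_mset (d t) (T t)) /\
  (forall r, K r -> #|` r| <= 2 ->
     exists D, is_bij (fun t => prec K r t) D (T r) /\
       forall t, prec K r t -> in_mset (D t) (T t)).

(* Main.v *)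
Require Import Defs.
From mathcomp Require Import all_boot all_order all_algebra.
From mathcomp Require Import finmap zify.
From Stdlib Require Import ClassicalEpsilon.
Set Implicit Arguments. Unset Strict Implicit. Unset Printing Implicit Defensive.
Local Open Scope fset_scope.

Definition mseq (C : mset) : seq Note :=
  flatten [seq nseq (C M) M | M <- index_enum Note].

Lemma count_mseq C N : count_mem N (mseq C) = C N.
Proof.
rewrite /mseq count_flatten sumnE big_map.
rewrite big_map (bigD1_seq N) ?mem_index_enum ?index_enum_uniq //= count_nseq /= eqxx mul1n.
rewrite big1 ?addn0 // => M /negbTE MN; by rewrite count_nseq /= MN.
Qed.

Lemma size_mseq C : size (mseq C) = morder C.
Proof.
rewrite /mseq size_flatten /shape sumnE -map_comp big_map /morder.
by apply: eq_bigr => M _; rewrite /= size_nseq.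
Qed.

Definition lab (V : eqType) (l : seq V) (C : mset) (t : V) : Note :=
  nth (0%R : 'Z_12) (mseq C) (index t l).

Lemma map_index_nth (V : eqType) (T : Type) (x0 : T) (l : seq V) (m : seq T) :
  uniq l -> size l = size m -> [seq nth x0 m (index t l) | t <- l] = m.
Proof.
elim: l m => [|x l IH] [|y m] //= /andP[xl ul] [sz].
rewrite eqxx /=; congr (_ :: _); rewrite -{2}(IH m ul sz).
apply/eq_in_map => t tl /=; case: eqP => // xt; by rewrite xt tl in xl.
Qed.

Lemma lab_count (V : eqType) (l : seq V) C N :
  uniq l -> size l = morder C -> count (fun t => lab l C t == N) l = C N.
Proof.
move=> ul sz; have sz' : size l = size (mseq C) by rewrite size_mseq.
by rewrite -count_mseq -(map_index_nth (0%R : 'Z_12) ul sz') count_map.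
Qed.

Lemma lab_in (V : eqType) (l : seq V) C t :
  uniq l -> size l = morder C -> t \in l -> in_mset (lab l C t) C.
Proof.
move=> ul sz tl; rewrite /in_mset -(lab_count _ ul sz) -has_count.
by apply/hasP; exists t.
Qed.

Lemma morder_count (V : eqType) (l : seq V) (f : V -> Note) :
  morder [ffun N => count (fun x => f x == N) l] = size l.
Proof.
rewrite /morder; under eq_bigr do rewrite ffunE.
elim: l => [|x l IH] /=; first by rewrite big1.
rewrite big_split /= IH (bigD1 (f x)) //= eqxx big1 // => M /negbTE.
by rewrite eq_sym => ->.
Qed.

Definition enumL (V : choiceType) (A : {fset V} -> Prop) : seq {fset V} :=
  epsilon (inhabits [::]) (fun l => uniq l /\ forall t, t \in l <-> A t).

Lemma enumL_spec (V : choiceType) (A : {fset V} -> Prop) l :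
  uniq l -> (forall t, t \in l <-> A t) ->
  [/\ uniq (enumL A), (forall t, t \in enumL A <-> A t) & size (enumL A) = size l].
Proof.
move=> ul Hl.
have [u1 H1] : uniq (enumL A) /\ forall t, t \in enumL A <-> A t.
  by apply: (epsilon_spec (inhabits [::]) (fun l => uniq l /\ forall t, t \in l <-> A t)); exists l.
split=> //; apply/perm_size/uniq_perm => // t.
by apply/idP/idP => h; [apply/Hl/H1 | apply/H1/Hl].
Qed.

Lemma card1E (V : choiceType) (A : {fset V}) : #|` A| = 1 -> exists x, A = [fset x].
Proof. by move=> h; apply/cardfs1P/eqP. Qed.

Lemma third (V : choiceType) (f : {fset V}) v a :
  v \in f -> a \in f -> v != a -> #|` f| = 3 -> exists b, f = [fset v; a; b].
Proof.
move=> vf af va cf.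
have sub : [fset v; a] `<=` f.
  apply/fsubsetP => x; rewrite !in_fsetE; case/orP => /eqP ->; [exact: vf | exact: af].
have := cardfsDS sub; rewrite cardfs2 va cf => /card1E [b hb].
have bf : b \in f.
  have : b \in f `\` [fset v; a] by rewrite hb in_fset1.
  by rewrite in_fsetD => /andP[].
exists b; apply/fsetP => x; rewrite !in_fsetE.
apply/idP/idP.
  move=> xf; case: (x =P v) => //= xv; case: (x =P a) => //= xa.
  have : x \in f `\` [fset v; a].
    by rewrite in_fsetD xf andbT !in_fsetE; apply/norP; split; apply/eqP.
  by rewrite hb in_fset1.
by case/orP => [/orP[]|] /eqP ->.
Qed.

Section Topo.
Variables (V : choiceType) (K : {fset V} -> Prop) (HK : triangulated_surface K).

Lemma L_down s n : K s -> #|` s| = n.+2 ->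
  exists l, [/\ uniq l, size l = n.+2 & forall t, t \in l <-> prec K t s].
Proof.
move=> Ks cs.
have cD a : a \in s -> #|` s `\ a| = n.+1.
  by move=> as_; have := cardfsD1 a s; rewrite as_ cs; lia.
exists [seq s `\ a | a <- enum_fset s]; split.
- rewrite map_inj_in_uniq ?fset_uniq // => a b as_ bs eq.
  apply/eqP; apply/negPn/negP => ab.
  have : a \in s `\ b by rewrite in_fsetD1 ab as_.
  by rewrite -eq in_fsetD1 eqxx.
- by rewrite size_map.
move=> t; split.
- case/mapP => a as_ ->; split; last split=> //; last split.
  + apply: (ts_closed HK Ks (fsubD1set _ _)).
    by rewrite -cardfs_gt0 cD.
  + exact: fsubD1set.
  + by rewrite cD // cs.
- case=> Kt [_ [ts ct]].
  have := cardfsDS ts; rewrite -ct subSnn => /card1E [a ha].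
  have : a \in s `\` t by rewrite ha in_fset1.
  rewrite in_fsetD => /andP[at_ as_].
  apply/mapP; exists a => //.
  apply/eqP; rewrite eqEfcard cD //; apply/andP; split; last by lia.
  apply/fsubsetP => x xt; rewrite in_fsetD1 (fsubsetP ts _ xt) andbT.
  by apply/eqP => xa; rewrite -xa xt in at_.
Qed.

Lemma L_up_edge e : K e -> #|` e| = 2 ->
  exists l, [/\ uniq l, size l = 2 & forall t, t \in l <-> prec K e t].
Proof.
move=> Ke ce.
have [f1 [f2 [f12 [[Kf1 c1] s1] [[Kf2 c2] s2] Hf]]] := ts_edge_two_faces HK (conj Ke ce).
exists [:: f1; f2]; split => //=.
  by rewrite inE f12.
move=> t; rewrite !inE; split.
  by case/orP => /eqP ->; do !split => //; rewrite ce ?c1 ?c2.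
case=> _ [Kt [et ct]].
have ct3 : #|` t| = 3 by rewrite -ct ce.
have [->|->] := Hf t (conj Kt ct3) et.
  by rewrite eqxx.
by rewrite eqxx orbT.
Qed.

Lemma L_up_vert r : K r -> #|` r| = 1 ->
  exists l, uniq l /\ forall t, t \in l <-> prec K r t.
Proof.
move=> Kr cr; have [v rv] := card1E cr; subst r.
have [w [uw sw Hw]] := ts_link_cycle HK (conj Kr cr).
have vw : v \notin w.
  apply/negP => vw.
  have [Kf cf] := (Hw v (next w v)).2 (conj vw (or_introl erefl)).
  have : #|` [fset v; v; next w v]| <= 2.
    rewrite (_ : [fset v; v; next w v] = [fset v; next w v]) ?cardfs2; first by case: (_ != _).
    by apply/fsetP => x; rewrite !in_fsetE; case: (x == v).
  by rewrite cf.
have av a : a \in w -> v != a by move=> aw; apply/eqP => e; rewrite e aw in vw.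
exists [seq [fset v; a] | a <- w]; split.
  rewrite map_inj_in_uniq // => a b aw bw e.
  have : a \in [fset v; b] by rewrite -e fset22.
  rewrite in_fset2 eq_sym (negbTE (av _ aw)) /= => /eqP //.
move=> t; split.
  case/mapP => a aw ->.
  have [KF cF] := (Hw a (next w a)).2 (conj aw (or_introl erefl)).
  split=> //; split; last split.
  - apply: (ts_closed HK KF).
      by apply/fsubsetP => x; rewrite !in_fsetE => /orP[] ->; rewrite ?orbT.
    by rewrite -cardfs_gt0 cardfs2.
  - by rewrite fsub1set fset21.
  - by rewrite cardfs1 cardfs2 av.
case=> _ [Kt [vt ct]].
rewrite fsub1set in vt.
have : #|` t `\ v| = 1 by have := cardfsD1 v t; rewrite vt -ct cardfs1; lia.
case/card1E => a ha.
have : a \in t `\ v by rewrite ha fset11.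
rewrite in_fsetD1 => /andP[av' at_].
have te : t = [fset v; a] by rewrite -(fsetD1K vt) ha.
have [f [[Kf cf] tf]] := ts_pure HK Kt.
have va : v != a by rewrite eq_sym.
have [b fb] := third (fsubsetP tf _ vt) (fsubsetP tf _ at_) va cf.
have Ff : is_face K [fset v; a; b] by rewrite -fb.
have [aw _] := (Hw a b).1 Ff.
by rewrite te; apply/mapP; exists a.
Qed.

End Topo.

Section Constr.
Variables (V : choiceType) (K : {fset V} -> Prop) (T2 : {fset V} -> mset).
Definition DL s := enumL (fun t => prec K t s).
Definition UL r := enumL (fun t => prec K r t).
Definition note f := lab (DL f) (T2 f).
Definition Te e : mset := [ffun N => count (fun f => note f e == N) (UL e)].
Definition labE e := lab (DL e) (Te e).
Definition Tv v : mset := [ffun N => count (fun e => labE e v == N) (UL v)].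
Definition Tt s := if #|` s| == 3 then T2 s else if #|` s| == 2 then Te s else Tv s.
End Constr.

Theorem mainTheorem1 (V : choiceType) (K : {fset V} -> Prop)
    (HK : triangulated_surface K) (T2 : {fset V} -> mset)
    (H3 : forall s, is_face K s -> morder (T2 s) = 3) :
  exists T : {fset V} -> mset,
    is_tonnetz K T /\ (forall s, is_face K s -> T s = T2 s).
Proof.
have DLs s n : K s -> #|` s| = n.+2 ->
    [/\ uniq (DL K s), (forall t, t \in DL K s <-> prec K t s) & size (DL K s) = n.+2].
  move=> Ks cs; have [l [ul sl Hl]] := L_down HK Ks cs.
  by have [] := enumL_spec ul Hl; rewrite sl.
have ULe e : K e -> #|` e| = 2 ->
    [/\ uniq (UL K e), (forall t, t \in UL K e <-> prec K e t) & size (UL K e) = 2].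
  move=> Ke ce; have [l [ul sl Hl]] := L_up_edge HK Ke ce.
  by have [] := enumL_spec ul Hl; rewrite sl.
have ULv r : K r -> #|` r| = 1 ->
    uniq (UL K r) /\ (forall t, t \in UL K r <-> prec K r t).
  move=> Kr cr; have [l [ul Hl]] := L_up_vert HK Kr cr.
  by have [] := enumL_spec ul Hl.
have cdim s : K s -> 0 < #|` s| <= 3 := ts_dim HK (s := s).
exists (Tt K T2); split; last first.
  by move=> s [Ks cs]; rewrite /Tt cs.
split.
- move=> s Ks c2.
  move: (cdim s Ks) => /andP[_ d3].
  have [c3|c2'] : #|` s| = 3 \/ #|` s| = 2 by lia.
  + have [u e sz] := DLs s 1 Ks c3.
    rewrite /Tt c3 /=; exists (note K T2 s); split.
      exists (DL K s); split => // N.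
      by apply: lab_count => //; rewrite sz H3.
    move=> t pt; have [Kt [_ [_ ct]]] := pt.
    have ct2 : #|` t| = 2 by rewrite c3 in ct; case: ct.
    rewrite /Tt ct2 /= /in_mset /Te ffunE -has_count; apply/hasP; exists s => //.
    by have [_ -> _] := ULe t Kt ct2.
  + have [u e sz] := DLs s 0 Ks c2'.
    rewrite /Tt c2' /=; exists (labE K T2 s); split.
      exists (DL K s); split => // N.
      apply: lab_count => //; rewrite sz /Te morder_count.
      by have [_ _ ->] := ULe s Ks c2'.
    move=> t pt; have [Kt [_ [_ ct]]] := pt.
    have ct1 : #|` t| = 1 by rewrite c2' in ct; case: ct.
    rewrite /Tt ct1 /= /in_mset /Tv ffunE -has_count; apply/hasP; exists s => //.
    by have [_ ->] := ULv t Kt ct1.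
- move=> r Kr c2.
  move: (cdim r Kr) => /andP[d0 _].
  have [c2'|c1] : #|` r| = 2 \/ #|` r| = 1 by lia.
  + have [u e sz] := ULe r Kr c2'.
    rewrite /Tt c2' /=; exists (fun f => note K T2 f r); split.
      by exists (UL K r); split => // N; rewrite /Te ffunE.
    move=> t pt; have [_ [Kt [_ ct]]] := pt.
    have ct3 : #|` t| = 3 by rewrite -ct c2'.
    rewrite /Tt ct3 /=.
    have [u' e' sz'] := DLs t 1 Kt ct3.
    by apply: lab_in => //; [rewrite sz' H3 | apply/e'].
  + have [u e] := ULv r Kr c1.
    rewrite /Tt c1 /=; exists (fun f => labE K T2 f r); split.
      by exists (UL K r); split => // N; rewrite /Tv ffunE.
    move=> t pt; have [_ [Kt [_ ct]]] := pt.
    have ct2 : #|` t| = 2 by rewrite -ct c1.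
    rewrite /Tt ct2 /=.
    have [u' e' sz'] := DLs t 0 Kt ct2.
    apply: lab_in => //; last by apply/e'.
    rewrite sz' /Te morder_count.
    by have [_ _ ->] := ULe t Kt ct2.
Qed.
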